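(* Let $N\ge 3$ and consider a planar ''wheel'' framework in $\mathbb{R}^2$: a hub vertex at $\mathbf{U}_0$ and spoke vertices at $\mathbf{U}_1,\dots,\mathbf{U}_N$ arranged in counterclockwise order around $\mathbf{U}_0$, with all indices taken modulo $N$. Its edges are the $N$ spokes $(0,i)$ and the $N$ rim edges $(i,i+1)$, $i=1,\dots,N$. Let $L_i=|\mathbf{U}_i-\mathbf{U}_0|$, $\Delta L_{i,i+1}=|\mathbf{U}_{i+1}-\mathbf{U}_i|$, and let $\alpha_{i,i+1}\in(0,\pi)$ be the planar angle at $\mathbf{U}_0$ between spokes $i$ and $i+1$, with $\sum_{i=1}^N\alpha_{i,i+1}=2\pi$. Define $$\sigma_{i,i+1}=-\csc\alpha_{i,i+1}\,\frac{\Delta L_{i,i+1}}{L_iL_{i+1}}$$ on rim edge $(i,i+1)$, and $$\sigma_i=\frac{\csc\alpha_{i,i+1}}{L_{i+1}}+\frac{\csc\alpha_{i-1,i}}{L_{i-1}}-\frac{\cot\alpha_{i,i+1}+\cot\alpha_{i-1,i}}{L_i}$$ on spoke $(0,i)$. Then this assignment $\boldsymbol{\sigma}$ is a self stress of the framework. That is, for every vertex $n\in\{0,1,\dots,N\}$, $$\sum_{m:\,(n,m)\text{ an edge}}\sigma_{(n,m)}\,\frac{\mathbf{U}_n-\mathbf{U}_m}{|\mathbf{U}_n-\mathbf{U}_m|}=\mathbf{0}.$$ Equivalently, $\boldsymbol{\sigma}^T\mathbf{C}=\mathbf{0}^T$, where $\mathbf{C}$ is the compatibility matrix whose row for edge $(n,m)$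 sends the in-plane displacements $(\mathbf{u}_1,\mathbf{u}_2,\dots)$ to $\frac{\mathbf{U}_n-\mathbf{U}_m}{|\mathbf{U}_n-\mathbf{U}_m|}\cdot(\mathbf{u}_n-\mathbf{u}_m)$.
   Context: A self stress of a bar framework is an assignment of a real number $\sigma_e$ to each edge $e$ such that force balance holds at every vertex, with the forces directed along unit edge vectors as written in the claim. The wheel arises as the star of an internal vertex of a planar triangulated crease pattern: the faces are the triangles $(\mathbf{U}_0,\mathbf{U}_i,\mathbf{U}_{i+1})$, which is why each angle lies in $(0,\pi)$. *)

(* Defs.v *)
From HB Require Import structures.
From mathcomp Require Import all_boot all_order all_algebra.
From mathcomp Require Import reals trigo.
Set Implicit Arguments. Unset Strict Implicit. Unset Printing Implicit Defensive.
Import Order.TTheory GRing.Theory Num.Theory.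
Local Open Scope ring_scope.

Section Defs.
Variable R : realType.

Definition vx (v : 'rV[R]_2) : R := v ord0 ord0.
Definition vy (v : 'rV[R]_2) : R := v ord0 (@Ordinal 2 1 isT).
Definition dot (u v : 'rV[R]_2) : R := vx u * vx v + vy u * vy v.
Definition cross (u v : 'rV[R]_2) : R := vx u * vy v - vy u * vx v.
Definition vnorm (v : 'rV[R]_2) : R := Num.sqrt (dot v v).

Definition unitdir (a b : 'rV[R]_2) : 'rV[R]_2 := (vnorm (a - b))^-1 *: (a - b).

Definition csc (x : R) : R := (sin x)^-1.
Definition cot (x : R) : R := cos x / sin x.

Definition is_self_stress (V : finType) (p : V -> 'rV[R]_2) (E : rel V)
    (s : V -> V -> R) : Prop :=
  (forall n m, E n m -> s n m = s m n) /\
  forall n : V, \sum_(m : V | E n m) s n m *: unitdir (p n) (p m) = 0.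

(* The wheel on N spokes.  Vertex None = hub U_0, vertex Some i (i : 'I_N)
   = spoke vertex U_{i+1} of the paper; indices mod N via ordS / ord_pred. *)
Definition wheel_pos (N : nat) (U0 : 'rV[R]_2) (U : 'I_N -> 'rV[R]_2)
    (v : option 'I_N) : 'rV[R]_2 :=
  match v with None => U0 | Some i => U i end.

Definition wheel_edge (N : nat) : rel (option 'I_N) := fun a b =>
  match a, b with
  | None, Some _ => true
  | Some _, None => true
  | Some i, Some j => (j == ordS i) || (i == ordS j)
  | None, None => false
  end.

Definition spokeL N (U0 : 'rV[R]_2) (U : 'I_N -> 'rV[R]_2) (i : 'I_N) : R :=
  vnorm (U i - U0).
Definition rimL N (U : 'I_N -> 'rV[R]_2) (i : 'I_N) : R :=
  vnorm (U (ordS i) - U i).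

(* sigma_{i,i+1} on rim edge (i, i+1); alpha i = alpha_{i,i+1} *)
Definition sigma_rim N (U0 : 'rV[R]_2) (U : 'I_N -> 'rV[R]_2) (alpha : 'I_N -> R)
    (i : 'I_N) : R :=
  - csc (alpha i) * rimL U i / (spokeL U0 U i * spokeL U0 U (ordS i)).

Definition sigma_spoke N (U0 : 'rV[R]_2) (U : 'I_N -> 'rV[R]_2) (alpha : 'I_N -> R)
    (i : 'I_N) : R :=
  csc (alpha i) / spokeL U0 U (ordS i)
  + csc (alpha (ord_pred i)) / spokeL U0 U (ord_pred i)
  - (cot (alpha i) + cot (alpha (ord_pred i))) / spokeL U0 U i.

Definition wheel_stress N (U0 : 'rV[R]_2) (U : 'I_N -> 'rV[R]_2) (alpha : 'I_N -> R)
    (a b : option 'I_N) : R :=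
  match a, b with
  | None, Some i => sigma_spoke U0 U alpha i
  | Some i, None => sigma_spoke U0 U alpha i
  | Some i, Some j =>
      if j == ordS i then sigma_rim U0 U alpha i
      else if i == ordS j then sigma_rim U0 U alpha j
      else 0
  | None, None => 0
  end.

End Defs.

(* Main.v *)
Require Import Defs.
From HB Require Import structures.
From mathcomp Require Import all_boot all_order all_algebra.
From mathcomp Require Import reals trigo.
From mathcomp Require Import ring lra zify.
Import Order.TTheory GRing.Theory Num.Theory.
Local Open Scope ring_scope.
Set Implicit Arguments. Unset Strict Implicit.

Section H.
Variable R : realType.
Implicit Types (u v p q : 'rV[R]_2).

Lemma vxB u v : vx (u - v) = vx u - vx v. Proof. by rewrite /vx !mxE. Qed.
Lemma vyB u v : vy (u - v) = vy u - vy v. Proof. by rewrite /vy !mxE. Qed.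
Lemma vxZ c v : vx (c *: v) = c * vx v. Proof. by rewrite /vx !mxE. Qed.
Lemma vyZ c v : vy (c *: v) = c * vy v. Proof. by rewrite /vy !mxE. Qed.
Lemma vx_sum (I : finType) (P : pred I) (F : I -> 'rV[R]_2) :
  vx (\sum_(i | P i) F i) = \sum_(i | P i) vx (F i).
Proof. by rewrite /vx summxE. Qed.
Lemma vy_sum (I : finType) (P : pred I) (F : I -> 'rV[R]_2) :
  vy (\sum_(i | P i) F i) = \sum_(i | P i) vy (F i).
Proof. by rewrite /vy summxE. Qed.

Lemma rv2_eq0 v : vx v = 0 -> vy v = 0 -> v = 0.
Proof.
move=> hx hy; apply/rowP => j; rewrite !mxE.
case: j => [[|[|k]] Hk] //.
  by rewrite (_ : Ordinal Hk = ord0) //; apply: val_inj.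
by rewrite (_ : Ordinal Hk = @Ordinal 2 1 isT) //; apply: val_inj.
Qed.

Lemma vnorm_sq v : vnorm v ^+ 2 = vx v ^+ 2 + vy v ^+ 2.
Proof. rewrite /vnorm sqr_sqrtr /dot; [ring | nra]. Qed.

Lemma vnormN u v : vnorm (u - v) = vnorm (v - u).
Proof. rewrite /vnorm /dot !vxB !vyB; congr Num.sqrt; ring. Qed.

Lemma vnorm_gt0 v : v != 0 -> 0 < vnorm v.
Proof.
move=> hv; rewrite lt_neqAle sqrtr_ge0 andbT; apply/negP => /eqP h0.
move/negP: hv; apply; apply/eqP.
have h2 := vnorm_sq v; rewrite -h0 expr0n /= in h2.
apply: rv2_eq0; nra.
Qed.

Lemma dotC u v : dot u v = dot v u. Proof. rewrite /dot; ring. Qed.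
Lemma crossC u v : cross u v = - cross v u. Proof. rewrite /cross; ring. Qed.

Lemma key p q c s : 0 < vnorm p ->
  c * (vnorm p * vnorm q) = dot p q -> s * (vnorm p * vnorm q) = cross p q ->
  vx q = vnorm q * (c * vx p - s * vy p) / vnorm p /\
  vy q = vnorm q * (c * vy p + s * vx p) / vnorm p.
Proof.
move=> hp hc hs; have hp0 : vnorm p ^+ 2 != 0 by rewrite expf_neq0 // gt_eqF.
have hp1 : vnorm p != 0 by rewrite gt_eqF.
have E1 : vx q * vnorm p ^+ 2 = (c * (vnorm p * vnorm q)) * vx p - (s * (vnorm p * vnorm q)) * vy p.
  by rewrite hc hs vnorm_sq /dot /cross; ring.
have E2 : vy q * vnorm p ^+ 2 = (c * (vnorm p * vnorm q)) * vy p + (s * (vnorm p * vnorm q)) * vx p.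
  by rewrite hc hs vnorm_sq /dot /cross; ring.
split.
  by rewrite -[vx q](mulfK hp0) E1; field.
by rewrite -[vy q](mulfK hp0) E2; field.
Qed.

Lemma valS n (i : 'I_n) : nat_of_ord (ordS i) = if i.+1 == n then 0%N else i.+1.
Proof.
rewrite /=; case: eqP => [->|h]; first by rewrite modnn.
by rewrite modn_small //; have := ltn_ord i; lia.
Qed.

Lemma SS_neq n (i : 'I_n) : (3 <= n)%N -> i != ordS (ordS i).
Proof.
move=> hn; apply/negP => /eqP E.
move: (@valS _ (ordS i)) (@valS _ i) (congr1 (@nat_of_ord n) E) (ltn_ord i).

move: (nat_of_ord (ordS (ordS i))) (nat_of_ord (ordS i)) => b a -> ->.
by case: (i.+1 =P n) => h1 /=; case: eqP => h2 /=; lia.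
Qed.


Lemma vxD u v : vx (u + v) = vx u + vx v. Proof. by rewrite /vx !mxE. Qed.
Lemma vyD u v : vy (u + v) = vy u + vy v. Proof. by rewrite /vy !mxE. Qed.

Lemma hub_sum N (x y L s c : 'I_N -> R) :
 (forall i, L i != 0) -> (forall i, s i != 0) ->
 (forall i, x (ordS i) = L (ordS i) * (c i * x i - s i * y i) / L i) ->
 (forall i, x (ord_pred i) = L (ord_pred i) * (c (ord_pred i) * x i + s (ord_pred i) * y i) / L i) ->
 \sum_(i < N) ((s i)^-1 / L (ordS i) + (s (ord_pred i))^-1 / L (ord_pred i)
     - (c i / s i + c (ord_pred i) / s (ord_pred i)) / L i) * (x i / L i) = 0.
Proof.
move=> hL hs hS hP.
pose A i := (s i)^-1 / L (ordS i) * (x i / L i).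
pose B i := (s (ord_pred i))^-1 / L (ord_pred i) * (x i / L i).
pose C i := (c i / s i + c (ord_pred i) / s (ord_pred i)) / L i * (x i / L i).
transitivity (\sum_(i < N) A i + \sum_(i < N) B i - \sum_(i < N) C i).
  rewrite -big_split -sumrB; apply: eq_bigr => i _; rewrite /A /B /C /=. ring.
rewrite (reindex_inj (@ord_pred_inj N)) [\sum_(i < N) B i](reindex_inj (@ordS_inj N)).
rewrite -big_split -sumrB /=; apply: big1 => k _.
rewrite /A /B /C ord_predK ordSK hS hP.
have := hL k; have := hs k; have := hL (ordS k); have := hL (ord_pred k);
  have := hs (ord_pred k) => *.
by field; rewrite ?hL ?hs.
Qed.
End H.

Unset Implicit Arguments. Set Strict Implicit.

Theorem mainTheorem1 (R : realType) (N : nat) (HN : (3 <= N)%N)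
    (U0 : 'rV[R]_2) (U : 'I_N -> 'rV[R]_2) (alpha : 'I_N -> R) :
  (forall i, U i != U0) ->
  (forall i, 0 < alpha i < pi) ->
  (* alpha i is the counterclockwise angle at U0 from spoke i to spoke i+1 *)
  (forall i, cos (alpha i) * (spokeL U0 U i * spokeL U0 U (ordS i))
               = dot (U i - U0) (U (ordS i) - U0)) ->
  (forall i, sin (alpha i) * (spokeL U0 U i * spokeL U0 U (ordS i))
               = cross (U i - U0) (U (ordS i) - U0)) ->
  \sum_(i < N) alpha i = 2 * pi ->
  is_self_stress (wheel_pos U0 U) (@wheel_edge N) (wheel_stress U0 U alpha).
Proof.
move=> hU ha hc hs _.
have hL j : 0 < spokeL U0 U j by apply: vnorm_gt0; rewrite subr_eq0.
have hL0 j : spokeL U0 U j != 0 by rewrite gt_eqF.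
have hsn j : 0 < sin (alpha j) by apply: sin_gt0_pi.
have hsn0 j : sin (alpha j) != 0 by rewrite gt_eqF.
have hD j : 0 < rimL U j.
  apply: vnorm_gt0; rewrite subr_eq0; apply/negP => /eqP E.
  have := hs j; rewrite E /cross (_ : forall a b : R, a * b - b * a = 0); last by move=> a b; ring.
  have : 0 < sin (alpha j) * (spokeL U0 U j * spokeL U0 U (ordS j)) by rewrite !mulr_gt0.
  lra.
have hD0 j : rimL U j != 0 by rewrite gt_eqF.
have kS j := key (hL j) (hc j) (hs j).
have kP j : vx (U (ord_pred j) - U0) = spokeL U0 U (ord_pred j) *
      (cos (alpha (ord_pred j)) * vx (U j - U0) + sin (alpha (ord_pred j)) * vy (U j - U0)) / spokeL U0 U j
   /\ vy (U (ord_pred j) - U0) = spokeL U0 U (ord_pred j) *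
      (cos (alpha (ord_pred j)) * vy (U j - U0) - sin (alpha (ord_pred j)) * vx (U j - U0)) / spokeL U0 U j.
  have h1 : cos (alpha (ord_pred j)) * (vnorm (U j - U0) * vnorm (U (ord_pred j) - U0))
       = dot (U j - U0) (U (ord_pred j) - U0).
    have := hc (ord_pred j); rewrite ord_predK /spokeL => E; rewrite dotC -E; ring.
  have h2 : (- sin (alpha (ord_pred j))) * (vnorm (U j - U0) * vnorm (U (ord_pred j) - U0))
       = cross (U j - U0) (U (ord_pred j) - U0).
    have := hs (ord_pred j); rewrite ord_predK /spokeL => E; rewrite crossC -E; ring.
  have [-> ->] := key (hL j) h1 h2.
  by rewrite /spokeL; split; ring.
split.
  case=> [i|] [j|] //= _.
  case: (j =P ordS i) => h1; case: (i =P ordS j) => h2 //.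
  by move: (SS_neq i HN); rewrite -h1 -h2 eqxx.
have hPS (i : 'I_N) : ord_pred i != ordS i.
  apply/negP => /eqP E; move: (SS_neq (ord_pred i) HN).
  by rewrite ord_predK -E eqxx.
case=> [i|].
  rewrite (bigD1 None) //= (bigD1 (Some (ordS i))) /=; last by rewrite eqxx.
  rewrite (bigD1 (Some (ord_pred i))) /=; last first.
    by rewrite ord_predK eqxx orbT /=; apply/eqP => -[] /eqP; apply/negP/hPS.
  rewrite big1 ?addr0; last first.
    case=> [j|] //=.
    rewrite andbT; case: (j =P ordS i) => [->|_]; first by rewrite eqxx andbF.
    by case: (i =P ordS j) => [->|] //=; rewrite ordSK eqxx andbF.
  rewrite eqxx (negbTE (hPS i)) ord_predK eqxx.
  have hN j : vnorm (U j - U0) != 0 by exact: hL0 j.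
  have hR j : vnorm (U (ordS j) - U j) != 0 by exact: hD0 j.
  have hR' : vnorm (U i - U (ord_pred i)) != 0 by have := hR (ord_pred i); rewrite ord_predK.
  have [ex ey] := kS i; have [px py] := kP i.
  rewrite /spokeL !vxB !vyB in ex ey px py.
  rewrite /unitdir /sigma_rim /sigma_spoke /csc /cot /rimL /spokeL ord_predK.
  rewrite [vnorm (U i - U (ordS i))]vnormN.
  apply: rv2_eq0.
  - rewrite !vxD !vxZ !vxB.
    have -> : vx (U (ordS i)) = (vx (U (ordS i)) - vx U0) + vx U0 by ring.
    have -> : vx (U (ord_pred i)) = (vx (U (ord_pred i)) - vx U0) + vx U0 by ring.
    rewrite ex px; field.
    by rewrite !hN hR' hR !hsn0.
  - rewrite !vyD !vyZ !vyB.
    have -> : vy (U (ordS i)) = (vy (U (ordS i)) - vy U0) + vy U0 by ring.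
    have -> : vy (U (ord_pred i)) = (vy (U (ord_pred i)) - vy U0) + vy U0 by ring.
    rewrite ey py; field.
    by rewrite !hN hR' hR !hsn0.
have i0 : 'I_N := Ordinal (leq_trans (isT : (0 < 3)%N) HN).
rewrite (reindex (fun j : 'I_N => Some j)) /=; last first.
  exists (fun m => if m is Some j then j else i0); first by [].
  by case=> [j|] //; rewrite inE.
have hN j : vnorm (U j - U0) != 0 by exact: hL0 j.
apply: rv2_eq0; rewrite ?vx_sum ?vy_sum.
- transitivity (- \sum_(j < N) sigma_spoke U0 U alpha j * (vx (U j - U0) / spokeL U0 U j)).
    rewrite -sumrN; apply: eq_bigr => j _.
    rewrite vxZ vxZ [vnorm (U0 - _)]vnormN !vxB /spokeL; ring.
  rewrite /sigma_spoke /csc /cot.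
  rewrite (@hub_sum R N (fun j => vx (U j - U0)) (fun j => vy (U j - U0)) (spokeL U0 U)
     (fun j => sin (alpha j)) (fun j => cos (alpha j))) ?oppr0 //.
  + by move=> j; have [-> _] := kS j.
  + by move=> j; have [-> _] := kP j.
- transitivity (- \sum_(j < N) sigma_spoke U0 U alpha j * (vy (U j - U0) / spokeL U0 U j)).
    rewrite -sumrN; apply: eq_bigr => j _.
    rewrite vyZ vyZ [vnorm (U0 - _)]vnormN !vyB /spokeL; ring.
  rewrite /sigma_spoke /csc /cot.
  rewrite (@hub_sum R N (fun j => vy (U j - U0)) (fun j => - vx (U j - U0)) (spokeL U0 U)
     (fun j => sin (alpha j)) (fun j => cos (alpha j))) ?oppr0 //.
  + by move=> j; have [_ ->] := kS j; rewrite /spokeL; ring.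
  + by move=> j; have [_ ->] := kP j; rewrite /spokeL; ring.
Qed.
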